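(* Let $(R,\mathfrak m)$ be a noetherian local ring whose nilradical $I=\mathrm{Nil}(R)$ is its only associated prime ideal, and let $\mathfrak p$ be a prime ideal of $R$. Take $y_1,\ldots,y_r\in\mathfrak p$ and $x_1,\ldots,x_t\in\mathfrak m\setminus\mathfrak p$ whose images form a regular system of parameters of $(R_{\mathfrak p})_{\rm red}$ and of $R/\mathfrak p$, respectively. If $\mathfrak p/(\mathfrak p^2+I)$ is a free $R/\mathfrak p$-module with basis $y_1+(\mathfrak p^2+I),\ldots,y_r+(\mathfrak p^2+I)$, then $R_{\rm red}$ is regular.
   Context: $\mathrm{Nil}(A)$ denotes the nilradical of a ring $A$ and $A_{\rm red}=A/\mathrm{Nil}(A)$. (In the paper $\mathfrak p$ is the center $\{a\in R:\nu_1(a)>0\}$ of a valuation $\nu_1$; only that $\mathfrak p$ is a prime ideal of $R$ is used.) *)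

(* Defs.v *)
From HB Require Import structures.
From mathcomp Require Import all_boot all_order all_algebra.
Set Implicit Arguments. Unset Strict Implicit. Unset Printing Implicit Defensive.
Import GRing.Theory.
Local Open Scope ring_scope.

Section CommAlg.
Variable R : comNzRingType.

Definition is_ideal (I : R -> Prop) : Prop :=
  I 0 /\ (forall a b, I a -> I b -> I (a + b)) /\ (forall c a, I a -> I (c * a)).

Definition is_prime (P : R -> Prop) : Prop :=
  is_ideal P /\ ~ P 1 /\ (forall a b, P (a * b) -> P a \/ P b).

Definition gen_by (n : nat) (g : 'I_n -> R) : R -> Prop :=
  fun a => exists c : 'I_n -> R, a = \sum_(i < n) c i * g i.

Definition ideal_add (I J : R -> Prop) : R -> Prop :=
  fun a => exists u v, I u /\ J v /\ a = u + v.

Definition ideal_sq (I : R -> Prop) : R -> Prop :=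
  fun a => exists n (u v : 'I_n -> R),
    (forall i, I (u i) /\ I (v i)) /\ a = \sum_(i < n) u i * v i.

Definition nilrad : R -> Prop := fun a => exists n : nat, a ^+ n = 0.

Definition noetherian : Prop :=
  forall I, is_ideal I -> exists n (g : 'I_n -> R), forall a, I a <-> gen_by g a.

(* (R, m) is local: m is exactly the set of non-units (so m is the unique maximal ideal) *)
Definition local_with (m : R -> Prop) : Prop :=
  is_ideal m /\ forall a, m a <-> ~ (exists b, a * b = 1).

Definition associated (P : R -> Prop) : Prop :=
  is_prime P /\ exists x, forall a, P a <-> a * x = 0.

Definition prime_chain (P : nat -> R -> Prop) (n : nat) : Prop :=
  (forall i, (i <= n)%N -> is_prime (P i)) /\
  (forall i, (i < n)%N -> (forall a, P i a -> P i.+1 a) /\ exists a, P i.+1 a /\ ~ P i a).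

Definition krull_dim_eq (d : nat) : Prop :=
  (exists P, prime_chain P d) /\ (forall P n, prime_chain P n -> (n <= d)%N).

(* Krull dimension of R/p equals d (chains of primes containing p) *)
Definition quot_dim_eq (p : R -> Prop) (d : nat) : Prop :=
  (exists P, prime_chain P d /\ forall a, p a -> P 0%N a) /\
  (forall P n, prime_chain P n -> (forall a, p a -> P 0%N a) -> (n <= d)%N).

(* height of p equals d (= dim R_p = dim (R_p)_red) *)
Definition height_eq (p : R -> Prop) (d : nat) : Prop :=
  (exists P, prime_chain P d /\ forall a, P d a <-> p a) /\
  (forall P n, prime_chain P n -> (forall a, P n a -> p a) -> (n <= d)%N).

(* images of x_1..x_t form a regular system of parameters of R/p,
   where m is the maximal ideal of R: x_i in m and m/p = (x)(R/p), t = dim R/p *)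
Definition rsop_quot (m p : R -> Prop) (t : nat) (x : 'I_t -> R) : Prop :=
  (forall i, m (x i)) /\ (forall a, m a <-> ideal_add p (gen_by x) a) /\ quot_dim_eq p t.

(* images of y_1..y_r form a regular system of parameters of (R_p)_red:
   y_i in p, p R_p = (y) R_p + Nil(R_p), and r = dim (R_p)_red = ht p.
   (a/1 lies in (y)R_p + Nil(R_p) iff s a lies in (y) + Nil(R) for some s not in p.) *)
Definition rsop_loc_red (p : R -> Prop) (r : nat) (y : 'I_r -> R) : Prop :=
  (forall i, p (y i)) /\
  (forall a, p a -> exists s, ~ p s /\ ideal_add (gen_by y) nilrad (s * a)) /\
  height_eq p r.

(* p/(p^2 + I) is a free R/p-module with basis the classes of y_1..y_r *)
Definition free_conormal_basis (p : R -> Prop) (r : nat) (y : 'I_r -> R) : Prop :=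
  (forall a, p a -> exists c : 'I_r -> R,
       ideal_add (ideal_sq p) nilrad (a - \sum_(i < r) c i * y i)) /\
  (forall c : 'I_r -> R,
       ideal_add (ideal_sq p) nilrad (\sum_(i < r) c i * y i) -> forall i, p (c i)).

(* R_red (local with maximal ideal m/Nil, dim R_red = dim R) is regular:
   its maximal ideal is generated by dim R_red elements *)
Definition red_regular (m : R -> Prop) : Prop :=
  exists d (z : 'I_d -> R), krull_dim_eq d /\
    forall a, m a <-> ideal_add (gen_by z) nilrad a.

End CommAlg.

(* Main.v *)
Require Import Defs.
From HB Require Import structures.
From mathcomp Require Import all_boot all_order all_algebra.
From mathcomp Require Import ring zify.
From Stdlib Require Import Classical ClassicalEpsilon.
Set Implicit Arguments. Unset Strict Implicit. Unset Printing Implicit Defensive.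
Import GRing.Theory.
Local Open Scope ring_scope.


Section CA.
Variable R : comNzRingType.
Implicit Types (I J K M P Q N : R -> Prop) (a b c s u v : R).

Definition lc (k : nat) (g : nat -> R) a := exists c : nat -> R, a = \sum_(i < k) c i * g i.
Definition imul I J a := exists s : seq (R * R),
  (forall pr, pr \in s -> I pr.1 /\ J pr.2) /\ a = \sum_(pr <- s) pr.1 * pr.2.
Fixpoint pw I k : R -> Prop :=
  match k with 0 => fun _ => True | k'.+1 => imul I (pw I k') end.
Definition sat P J a := exists s, ~ P s /\ J (s * a).
Definition prin y a := exists c, a = c * y.

Lemma id0 I : is_ideal I -> I 0.
Proof. by case. Qed.
Lemma idD I a b : is_ideal I -> I a -> I b -> I (a + b).
Proof. by case=> _ []; auto. Qed.
Lemma idM I c a : is_ideal I -> I a -> I (c * a).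
Proof. by case=> _ []; auto. Qed.
Lemma idMr I c a : is_ideal I -> I a -> I (a * c).
Proof. by move=> hI ha; rewrite mulrC; apply: idM. Qed.
Lemma idN I a : is_ideal I -> I a -> I (- a).
Proof. by move=> hI ha; rewrite -mulN1r; apply: idM. Qed.
Lemma idB I a b : is_ideal I -> I a -> I b -> I (a - b).
Proof. by move=> hI ha hb; apply: idD => //; apply: idN. Qed.
Lemma idBr I a b : is_ideal I -> I (a - b) -> I b -> I a.
Proof. by move=> hI ha hb; rewrite -(subrK b a); apply: idD. Qed.

Lemma id_sum I k (F : nat -> R) : is_ideal I -> (forall i, (i < k)%N -> I (F i)) ->
  I (\sum_(i < k) F i).
Proof.
move=> hI; elim: k => [|k IH] H; first by rewrite big_ord0; apply: id0.
rewrite big_ord_recr /=; apply: idD => //; last by apply: H.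
by apply: IH => i hi; apply: H; apply: ltnW.
Qed.

Lemma id_sum_seq I (s : seq (R * R)) (F : R * R -> R) : is_ideal I ->
  (forall pr, pr \in s -> I (F pr)) -> I (\sum_(pr <- s) F pr).
Proof.
move=> hI; elim: s => [|x s IH] H; first by rewrite big_nil; apply: id0.
rewrite big_cons; apply: idD => //; first by apply: H; rewrite inE eqxx.
by apply: IH => pr hpr; apply: H; rewrite inE hpr orbT.
Qed.

Lemma imul_ideal I J : is_ideal I -> is_ideal (imul I J).
Proof.
move=> hI; split; first by exists [::]; rewrite big_nil.
split.
  move=> a b [s [hs ->]] [t [ht ->]]; exists (s ++ t); rewrite big_cat; split => //.
  by move=> pr; rewrite mem_cat => /orP [] ?; auto.
move=> c a [s [hs ->]]; exists [seq (c * pr.1, pr.2) | pr <- s]; split.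
  by move=> pr /mapP [q hq ->] /=; case: (hs q hq) => h1 h2; split => //; apply: idM.
rewrite big_map mulr_sumr; apply: eq_bigr => pr _ /=; by rewrite mulrA.
Qed.

Lemma imul_elt I J u v : I u -> J v -> imul I J (u * v).
Proof.
move=> hu hv; exists [:: (u, v)]; rewrite big_cons big_nil addr0; split => //.
by move=> pr; rewrite inE => /eqP ->.
Qed.

Lemma imul_subr I J a : is_ideal J -> imul I J a -> J a.
Proof.
move=> hJ [s [hs ->]]; apply: id_sum_seq => // pr /hs [_ h]; exact: idM.
Qed.

Lemma imul_subl I J a : is_ideal I -> imul I J a -> I a.
Proof.
move=> hI [s [hs ->]]; apply: id_sum_seq => // pr /hs [h _]; exact: idMr.
Qed.

Lemma imul_mono I J I' J' a : (forall x, I x -> I' x) -> (forall x, J x -> J' x) ->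
  imul I J a -> imul I' J' a.
Proof. move=> h1 h2 [s [hs ->]]; exists s; split => // pr /hs [] ? ?; auto. Qed.

Lemma top_ideal : is_ideal (fun _ : R => True).
Proof. by []. Qed.

Lemma pw_ideal I k : is_ideal I -> is_ideal (pw I k).
Proof. by move=> hI; case: k => [|k] //=; apply: imul_ideal. Qed.

Lemma pw_desc I k a : is_ideal I -> pw I k.+1 a -> pw I k a.
Proof. by move=> hI /= h; apply: imul_subr h; apply: pw_ideal. Qed.

Lemma pw_le I k k' a : is_ideal I -> (k <= k')%N -> pw I k' a -> pw I k a.
Proof.
move=> hI /subnKC <-; elim: (k' - k)%N a => [|d IH] a; first by rewrite addn0.
by rewrite addnS => h; apply: IH; apply: pw_desc.
Qed.

Lemma pw_exp I k a : I a -> pw I k (a ^+ k).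
Proof. by move=> ha; elim: k => [|k IH] //=; rewrite exprS; apply: imul_elt. Qed.

Lemma lc_ideal k g : is_ideal (lc k g).
Proof.
split; first by exists (fun _ => 0); rewrite big1 // => i _; rewrite mul0r.
split.
  move=> a b [c ->] [d ->]; exists (fun i => c i + d i); rewrite -big_split /=.
  by apply: eq_bigr => i _; rewrite mulrDl.
move=> e a [c ->]; exists (fun i => e * c i); rewrite mulr_sumr.
by apply: eq_bigr => i _; rewrite mulrA.
Qed.

Lemma lc_gen k g j : (j < k)%N -> lc k g (g j).
Proof.
move=> hj; exists (fun i => (i == j)%:R).
rewrite (bigD1 (Ordinal hj)) //= eqxx mul1r big1 ?addr0 // => i hi.
have -> : (nat_of_ord i == j) = false.
  by apply/negbTE; apply: contra hi => /eqP h; apply/eqP/val_inj.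
by rewrite mul0r.
Qed.

Lemma lc_sub I k g a : is_ideal I -> (forall j, (j < k)%N -> I (g j)) -> lc k g a -> I a.
Proof. move=> hI hg [c ->]; apply: (@id_sum _ k (fun i => c i * g i)) => // i hi; apply: idM; auto. Qed.

Lemma mul_lc I M k h v : is_ideal I -> (forall a, M a -> lc k h a) -> imul I M v ->
  exists c : nat -> R, (forall l, I (c l)) /\ v = \sum_(l < k) c l * h l.
Proof.
move=> hI hM [s [hs ->]]; elim: s hs => [|pr s IH] hs.
  exists (fun _ => 0); split; first by move=> _; apply: id0.
  by rewrite big_nil big1 // => i _; rewrite mul0r.
have [h1 h2] := hs pr (mem_head _ _).
rewrite big_cons.
have [c [hc ->]] : exists c : nat -> R, (forall l, I (c l)) /\
   \sum_(pr <- s) pr.1 * pr.2 = \sum_(l < k) c l * h l.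
  by apply: IH => q hq; apply: hs; rewrite inE hq orbT.
case: (hM _ h2) => d hd.
exists (fun l => pr.1 * d l + c l); split.
  by move=> l; apply: idD => //; apply: idMr.
rewrite hd mulr_sumr -big_split /=; apply: eq_bigr => i _.
by rewrite mulrDl mulrA.
Qed.

Lemma prime_ideal P : is_prime P -> is_ideal P.
Proof. by case. Qed.

Lemma prime_notin_mul P a b : is_prime P -> ~ P a -> ~ P b -> ~ P (a * b).
Proof. by move=> [_ [_ hP]] ha hb /hP []. Qed.

Lemma prime_pow P a n : is_prime P -> P (a ^+ n) -> P a.
Proof.
move=> hP; elim: n => [|n IH]; first by rewrite expr0 => h; case: hP => _ [].
by rewrite exprS => /(proj2 (proj2 hP)) [] // /IH.
Qed.

Lemma prime_notin1 P : is_prime P -> ~ P 1.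
Proof. by case=> _ []. Qed.

Lemma prime_sub_notin P a c : is_prime P -> ~ P a -> P c -> ~ P (a - c).
Proof.
move=> hP ha hc h; apply: ha; apply: (idBr (prime_ideal hP) h hc).
Qed.

Lemma iadd_ideal I J : is_ideal I -> is_ideal J -> is_ideal (ideal_add I J).
Proof.
move=> hI hJ; split; first by exists 0, 0; rewrite addr0; split; [apply: id0 | split; [apply: id0 |]].
split.
  move=> a b [u [v [hu [hv ->]]]] [u' [v' [hu' [hv' ->]]]].
  exists (u + u'), (v + v'); split; first by apply: idD.
  by split; [apply: idD | rewrite addrACA].
move=> c a [u [v [hu [hv ->]]]]; exists (c * u), (c * v).
by split; [apply: idM | split; [apply: idM | rewrite mulrDr]].
Qed.

Lemma iadd_l I J a : is_ideal J -> I a -> ideal_add I J a.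
Proof. by move=> hJ ha; exists a, 0; rewrite addr0; split => //; split => //; apply: id0. Qed.
Lemma iadd_r I J a : is_ideal I -> J a -> ideal_add I J a.
Proof. by move=> hI ha; exists 0, a; rewrite add0r; split => //; apply: id0. Qed.

Lemma prin_ideal y : is_ideal (prin y).
Proof.
split; first by exists 0; rewrite mul0r.
split; first by move=> a b [c ->] [d ->]; exists (c + d); rewrite mulrDl.
by move=> e a [c ->]; exists (e * c); rewrite mulrA.
Qed.

Lemma sat_ideal P J : is_prime P -> is_ideal J -> is_ideal (sat P J).
Proof.
move=> hP hJ; split; first by exists 1; rewrite mulr0; split; [apply: prime_notin1 | apply: id0].
split.
  move=> a b [s [hs ha]] [t [ht hb]]; exists (s * t); split; first exact: prime_notin_mul.
  rewrite mulrDr; apply: idD => //.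
    by rewrite (mulrC s) -mulrA; apply: idM.
  by rewrite -mulrA; apply: idM.
move=> c a [s [hs ha]]; exists s; split => //; rewrite mulrCA; exact: idM.
Qed.

Lemma sat_incl P J a : is_prime P -> J a -> sat P J a.
Proof. by move=> hP ha; exists 1; rewrite mul1r; split => //; apply: prime_notin1. Qed.

Lemma sat_idem P J a : is_prime P -> sat P (sat P J) a -> sat P J a.
Proof.
move=> hP [s [hs [t [ht h]]]]; exists (t * s); split; first exact: prime_notin_mul.
by rewrite -mulrA.
Qed.

Lemma noeth_lc I : noetherian R -> is_ideal I -> exists k g, forall a, I a <-> lc k g a.
Proof.
move=> hN hI; case: (hN I hI) => k [g hg].
exists k, (fun i => if insub i is Some j then g j else 0) => a; rewrite hg; split.
  case=> c ->; exists (fun i => if insub i is Some j then c j else 0).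
  by apply: eq_bigr => i _; rewrite valK.
case=> c ->; exists (fun j => c (val j)); apply: eq_bigr => i _; by rewrite valK.
Qed.

End CA.


Section CA2.
Variable R : comNzRingType.
Implicit Types (I J K M P Q N : R -> Prop) (a b c s u v : R).

Lemma GN P K k (g : nat -> R) : is_prime P -> is_ideal K ->
  (forall j, (j < k)%N -> exists s, ~ P s /\ exists c : nat -> R, (forall l, P (c l)) /\
       K (s * g j - \sum_(l < k) c l * g l)) ->
  exists s, ~ P s /\ forall j, (j < k)%N -> K (s * g j).
Proof.
move=> hP hK; have hPi := prime_ideal hP.
elim: k => [|k IH] H.
  by exists 1; split; [apply: prime_notin1 | move=> j].
have [s0 [hs0 [c0 [hc0 hK0]]]] := H k (ltnSn k).
set u := s0 - c0 k.
have hu : ~ P u by apply: prime_sub_notin.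
have hK1 : K (u * g k - \sum_(l < k) c0 l * g l).
  by move: hK0; rewrite big_ord_recr /= /u; congr K; ring.
have [s1 [hs1 H1]] : exists s, ~ P s /\ forall j, (j < k)%N -> K (s * g j).
  apply: IH => j hj.
  have [sj [hsj [cj [hcj hKj]]]] := H j (ltnW hj).
  exists (u * sj); split; first exact: prime_notin_mul.
  exists (fun l => u * cj l + cj k * c0 l); split.
    by move=> l; apply: idD => //; [apply: idM | apply: idMr].
  have e : \sum_(l < k) (u * cj l + cj k * c0 l) * g l =
     u * \sum_(l < k) cj l * g l + cj k * \sum_(l < k) c0 l * g l.
    rewrite !mulr_sumr -big_split /=; apply: eq_bigr => i _; ring.
  rewrite e.
  have e2 : u * sj * g j - (u * \sum_(l < k) cj l * g l + cj k * \sum_(l < k) c0 l * g l)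
     = u * (sj * g j - \sum_(l < k.+1) cj l * g l) + cj k * (u * g k - \sum_(l < k) c0 l * g l).
    rewrite big_ord_recr /=; ring.
  by rewrite e2; apply: idD => //; apply: idM.
exists (s1 * u); split; first exact: prime_notin_mul.
move=> j; rewrite ltnS leq_eqVlt => /orP [/eqP ->|hj].
  have -> : s1 * u * g k = s1 * (u * g k - \sum_(l < k) c0 l * g l)
      + \sum_(l < k) c0 l * (s1 * g l).
    have -> : \sum_(l < k) c0 l * (s1 * g l) = s1 * \sum_(l < k) c0 l * g l.
      by rewrite mulr_sumr; apply: eq_bigr => i _; ring.
    ring.
  apply: idD => //; first by apply: idM.
  by apply: (@id_sum _ _ k (fun l => c0 l * (s1 * g l))) => // i hi; apply: idM => //; apply: H1.
by rewrite mulrAC; apply: idMr => //; apply: H1.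
Qed.

End CA2.


Section CA3.
Variable R : comNzRingType.
Implicit Types (I J K M P Q N : R -> Prop) (a b c s u v : R).

Lemma noeth_max (F : (R -> Prop) -> Prop) : noetherian R ->
  (forall J, F J -> is_ideal J) -> (exists J, F J) ->
  exists J, F J /\ forall J', F J' -> (forall a, J a -> J' a) -> forall a, J' a -> J a.
Proof.
move=> hN hF [J0 hJ0]; apply: NNPP => Hn.
have H : forall J, F J -> exists J', F J' /\ (forall a, J a -> J' a) /\ exists a, J' a /\ ~ J a.
  move=> J FJ; apply: NNPP => Hn2; apply: Hn; exists J; split => // J' FJ' sub a Ja'.
  apply: NNPP => naJ; apply: Hn2; exists J'; split => //; split => //; by exists a.
pose T := {J : R -> Prop | F J}.
have step : forall t : T, {t' : T | (forall a, sval t a -> sval t' a) /\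
                                      exists a, sval t' a /\ ~ sval t a}.
  move=> [J FJ]; apply: constructive_indefinite_description.
  have [J' [FJ' [h1 h2]]] := H J FJ; by exists (exist _ J' FJ').
pose f (t : T) := sval (step t).
pose Jn n := sval (iter n f (exist _ J0 hJ0)).
have hJn n : is_ideal (Jn n) by apply: hF; exact: (svalP (iter n f _)).
have inc n a : Jn n a -> Jn n.+1 a.
  by rewrite /Jn /=; move: (iter n f _) => t; case: (svalP (step t)) => h _; apply: h.
have strict n : exists a, Jn n.+1 a /\ ~ Jn n a.
  by rewrite /Jn /=; move: (iter n f _) => t; case: (svalP (step t)).
have mono i j a : (i <= j)%N -> Jn i a -> Jn j a.
  move=> /subnKC <-; elim: (j - i)%N => [|d IH]; first by rewrite addn0.
  by rewrite addnS => h; apply: inc; apply: IH.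
pose U a := exists n, Jn n a.
have hU : is_ideal U.
  split; first by exists 0%N; apply: id0.
  split.
    move=> a b [i ha] [j hb]; exists (maxn i j); apply: idD => //.
      by apply: (mono i) => //; apply: leq_maxl.
    by apply: (mono j) => //; apply: leq_maxr.
  by move=> c a [i ha]; exists i; apply: idM.
have [k [g hg]] := noeth_lc hN hU.
have [nn0 hnn0] : exists nn0, forall l, (l < k)%N -> Jn nn0 (g l).
  have hgl l : (l < k)%N -> U (g l) by move=> hl; apply/hg; apply: lc_gen.
  elim: k {hg} hgl => [|k IH] hgl; first by exists 0%N.
  have [nn1 h1] := IH (fun l hl => hgl l (ltnW hl)).
  have [nn2 h2] := hgl k (ltnSn k).
  exists (maxn nn1 nn2) => l; rewrite ltnS leq_eqVlt => /orP [/eqP ->|hl].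
    by apply: (mono nn2) => //; apply: leq_maxr.
  by apply: (mono nn1); [apply: leq_maxl | apply: h1].
have [a [ha1 ha2]] := strict nn0; apply: ha2.
have : U a by exists nn0.+1.
by move/hg; apply: lc_sub.
Qed.

End CA3.


Section CA4.
Variable R : comNzRingType.
Implicit Types (I J K M P Q N : R -> Prop) (a b c s u v : R).

Lemma pw_mono I I' k a : (forall x, I x -> I' x) -> pw I k a -> pw I' k a.
Proof.
elim: k a => [|k IH] a h //= hp; apply: (imul_mono h _ hp) => x; exact: IH.
Qed.

Lemma avoid_prime I P a : noetherian R -> is_ideal I -> is_prime P ->
  (forall s e, ~ P s -> ~ I (s * a ^+ e)) ->
  exists Q, is_prime Q /\ (forall z, I z -> Q z) /\ (forall z, Q z -> P z) /\ ~ Q a.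
Proof.
move=> hN hI hP hav.
pose F J := is_ideal J /\ (forall z, I z -> J z) /\ (forall s e, ~ P s -> ~ J (s * a ^+ e)).
have [Q [[hQi [hIQ hQav]] hmax]] : exists J, F J /\ forall J', F J' -> (forall x, J x -> J' x) -> forall x, J' x -> J x.
  apply: noeth_max => //; first by move=> J [].
  by exists I.
have key : forall b, ~ Q b -> exists s e, ~ P s /\ ideal_add Q (prin b) (s * a ^+ e).
  move=> b nb; apply: NNPP => Hn.
  have FJ : F (ideal_add Q (prin b)).
    split; first by apply: iadd_ideal => //; apply: prin_ideal.
    split; first by move=> z hz; apply: iadd_l; [apply: prin_ideal | apply: hIQ].
    move=> s e hs hJ; apply: Hn; by exists s, e.
  apply: nb; apply: (hmax _ FJ).
    by move=> x hx; apply: iadd_l => //; apply: prin_ideal.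
  by apply: iadd_r => //; exists 1; rewrite mul1r.
exists Q; split.
  split => //; split.
    by move=> h; apply: (hQav 1 0%N); [apply: prime_notin1 | rewrite expr0 mulr1].
  move=> b c hbc; apply: NNPP => Hn.
  have nb : ~ Q b by move=> h; apply: Hn; left.
  have nc : ~ Q c by move=> h; apply: Hn; right.
  have [s1 [e1 [hs1 [q1 [w1 [hq1 [[r1 ->] E1]]]]]]] := key b nb.
  have [s2 [e2 [hs2 [q2 [w2 [hq2 [[r2 ->] E2]]]]]]] := key c nc.
  apply: (hQav (s1 * s2) (e1 + e2)%N); first exact: prime_notin_mul.
  have -> : s1 * s2 * a ^+ (e1 + e2) = (s1 * a ^+ e1) * (s2 * a ^+ e2).
    by rewrite exprD; ring.
  rewrite E1 E2.
  have -> : (q1 + r1 * b) * (q2 + r2 * c) = q1 * (q2 + r2 * c) + (r1 * b) * q2 + (r1 * r2) * (b * c).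
    by ring.
  apply: idD => //; [apply: idD => //; [apply: idMr | apply: idM] | apply: idM] => //.
split => //; split.
  move=> z hz; apply: NNPP => nz; apply: (hQav z 0%N nz); by rewrite expr0 mulr1.
by move=> h; apply: (hQav 1 1%N); [apply: prime_notin1 | rewrite expr1 mul1r].
Qed.

Lemma min_rad I P : noetherian R -> is_ideal I -> is_prime P ->
  (forall Q, is_prime Q -> (forall z, I z -> Q z) -> (forall z, Q z -> P z) -> forall z, P z -> Q z) ->
  forall a, P a -> exists s e, ~ P s /\ I (s * a ^+ e).
Proof.
move=> hN hI hP hmin a ha; apply: NNPP => Hn.
have [Q [hQ [h1 [h2 h3]]]] : exists Q, is_prime Q /\ (forall z, I z -> Q z) /\ (forall z, Q z -> P z) /\ ~ Q a.
  apply: avoid_prime => // s e hs hI'; apply: Hn; by exists s, e.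
by apply: h3; apply: hmin.
Qed.

Lemma pigeon I P m (g : nat -> R) : is_ideal I -> is_prime P ->
  (forall l, (l < m)%N -> exists s e, ~ P s /\ I (s * g l ^+ e)) ->
  exists s k, ~ P s /\ forall z, pw (lc m g) k z -> I (s * z).
Proof.
move=> hI hP; elim: m => [|m IH] H.
  exists 1, 1%N; split; first exact: prime_notin1.
  move=> z /= /imul_subl -/(_ (lc_ideal 0 g)) [c ->]; rewrite big_ord0 mulr0; exact: id0.
have [s [ka [hs ha]]] := IH (fun l hl => H l (ltnW hl)).
have [s' [e [hs' he]]] := H m (ltnSn m).
set J := lc m g; set J' := lc m.+1 g; set gam := g m.
have claim : forall n ka' e', (ka + e <= ka' + e' + n)%N -> forall z z', pw J ka' z -> pw J' n z' ->
    I (s * s' * z * gam ^+ e' * z').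
  elim=> [|n IHn] ka' e' hle z z' hz hz'.
    rewrite addn0 in hle.
    case: (leqP ka ka') => hh.
      have := ha z (pw_le (lc_ideal m g) hh hz) => hsz.
      have -> : s * s' * z * gam ^+ e' * z' = (s * z) * (s' * gam ^+ e' * z') by ring.
      exact: idMr.
    have hee : (e <= e')%N.
      by rewrite -(leq_add2l ka); apply: (leq_trans hle); rewrite leq_add2r ltnW.
    have -> : s * s' * z * gam ^+ e' * z' = (s' * g m ^+ e) * (s * z * gam ^+ (e' - e) * z').
      by rewrite /gam -{1}(subnKC hee) exprD; ring.
    exact: idMr.
  case: hz' => sq [hsq ->].
  rewrite mulr_sumr; apply: id_sum_seq => // pr /hsq [[c hc] hv].
  rewrite hc big_ord_recr /=.
  have -> : s * s' * z * gam ^+ e' * ((\sum_(i < m) c i * g i + c m * g m) * pr.2) =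
     s * s' * (z * \sum_(i < m) c i * g i) * gam ^+ e' * pr.2
     + c m * (s * s' * z * gam ^+ e'.+1 * pr.2).
    by rewrite exprS /gam; ring.
  apply: idD => //.
    apply: (IHn ka'.+1 e') => //; first by lia.
    rewrite /= mulrC; apply: imul_elt => //; by exists c.
  apply: idM => //; apply: (IHn ka' e'.+1) => //; by lia.
exists (s * s'), (ka + e)%N; split; first exact: prime_notin_mul.
move=> z hz; have := claim (ka + e)%N 0%N 0%N (leqnn _) 1 z Logic.I hz.
by rewrite mulr1 expr0 mulr1.
Qed.

Lemma A1 I P : noetherian R -> is_ideal I -> is_prime P ->
  (forall Q, is_prime Q -> (forall z, I z -> Q z) -> (forall z, Q z -> P z) -> forall z, P z -> Q z) ->
  exists s k, ~ P s /\ forall z, pw P k z -> I (s * z).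
Proof.
move=> hN hI hP hmin.
have [m [g hg]] := noeth_lc hN (prime_ideal hP).
have [s [k [hs H]]] : exists s k, ~ P s /\ forall z, pw (lc m g) k z -> I (s * z).
  apply: pigeon => // l hl; apply: (min_rad hN hI hP hmin); apply/hg; exact: lc_gen.
exists s, k; split => // z hz; apply: H; apply: pw_mono hz => x /hg //.
Qed.

End CA4.


Section CA5.
Variable R : comNzRingType.
Implicit Types (I J K M P Q N : R -> Prop) (a b c s u v : R).

Lemma desc_le (B : nat -> R -> Prop) : (forall n a, B n.+1 a -> B n a) ->
  forall i j a, (i <= j)%N -> B j a -> B i a.
Proof.
move=> hB i j a /subnKC <-; elim: (j - i)%N => [|d IH]; first by rewrite addn0.
by rewrite addnS => h; apply: IH; apply: hB.
Qed.

Lemma lc_split g (h : nat -> R) a : lc g.+1 h a -> exists w c, lc g h w /\ a = w + c * h g.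
Proof.
case=> c ->; rewrite big_ord_recr /=; exists (\sum_(i < g) c i * h i), (c g).
by split => //; exists c.
Qed.

Lemma VS P g (h : nat -> R) (B : nat -> R -> Prop) : is_prime P ->
  (forall n, is_ideal (B n)) -> (forall n a, B n.+1 a -> B n a) ->
  (forall n a, B n a -> lc g h a) ->
  (forall n c l, (l < g)%N -> P c -> B n (c * h l)) ->
  exists n1, forall n, (n1 <= n)%N -> forall a, B n1 a -> sat P (B n) a.
Proof.
move=> hP; elim: g B => [|g IH] B hBi hBd hBl hBP.
  exists 0%N => n _ a /hBl [c ->]; rewrite big_ord0; apply: sat_incl => //; exact: id0.
pose B' n a := B n a /\ lc g h a.
have [n1 hn1] : exists n1, forall n, (n1 <= n)%N -> forall a, B' n1 a -> sat P (B' n) a.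
  apply: IH.
  - move=> n; split; first by split; apply: id0 => //; apply: lc_ideal.
    split; first by move=> a b [h1 h2] [h3 h4]; split; apply: idD => //; apply: lc_ideal.
    by move=> c a [h1 h2]; split; apply: idM => //; apply: lc_ideal.
  - by move=> n a [h1 h2]; split => //; apply: hBd.
  - by move=> n a [].
  - move=> n c l hl hc; split; first by apply: hBP => //; apply: ltnW.
    by apply: idM; [apply: lc_ideal | apply: lc_gen].
case: (classic (exists n2, (n1 <= n2)%N /\ forall a, B n2 a ->
          exists w p, lc g h w /\ P p /\ a = w + p * h g)) => [[n2 [hn12 H2]]|H2].
  exists n2 => n hn a ha.
  have [w [p [hw [hp E]]]] := H2 a ha.
  have hw' : B' n1 w.
    split => //; apply: (desc_le hBd hn12).
    have -> : w = a - p * h g by rewrite E addrK.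
    by apply: idB => //; apply: hBP.
  have [s [hs [hsw _]]] := hn1 n (leq_trans hn12 hn) w hw'.
  exists s; split => //; rewrite E mulrDr; apply: idD => //; apply: idM => //; exact: hBP.
exists n1 => n hn a ha.
have [b [hb hbn]] : exists b, B n b /\ ~ exists w p, lc g h w /\ P p /\ b = w + p * h g.
  apply: NNPP => Hn; apply: H2; exists n; split => // a' ha'; apply: NNPP => Hn2.
  by apply: Hn; exists a'.
have [w [c [hw E]]] := lc_split (hBl _ _ hb).
have hc : ~ P c by move=> hc; apply: hbn; exists w, c.
have [w' [c' [hw' E']]] := lc_split (hBl _ _ ha).
have hz : B' n1 (c * a - c' * b).
  split.
    apply: idB => //; first by apply: idM.
    by apply: idM => //; apply: (desc_le hBd hn).
  have -> : c * a - c' * b = c * w' - c' * w by rewrite E E'; ring.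
  by apply: idB; [apply: lc_ideal | apply: idM => //; apply: lc_ideal | apply: idM => //; apply: lc_ideal].
have [s [hs [hsz _]]] := hn1 n hn _ hz.
exists (s * c); split; first exact: prime_notin_mul.
have -> : s * c * a = s * (c * a - c' * b) + (s * c') * b by ring.
by apply: idD => //; apply: idM.
Qed.

Lemma DCC P k (J : nat -> R -> Prop) : noetherian R -> is_prime P ->
  (forall n, is_ideal (J n)) -> (forall n a, J n.+1 a -> J n a) ->
  (forall n a, pw P k a -> J n a) ->
  exists n0, forall n, (n0 <= n)%N -> forall a, J n0 a -> sat P (J n) a.
Proof.
move=> hN hP; have hPi := prime_ideal hP.
elim: k J => [|k IH] J hJi hJd hJP.
  by exists 0%N => n _ a _; apply: sat_incl => //; apply: hJP.
have hpk := pw_ideal k hPi.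
pose A n := ideal_add (J n) (pw P k).
have [n0 hn0] : exists n0, forall n, (n0 <= n)%N -> forall a, A n0 a -> sat P (A n) a.
  apply: IH.
  - by move=> n; apply: iadd_ideal.
  - by move=> n a [u [v [hu [hv ->]]]]; exists u, v; split => //; apply: hJd.
  - by move=> n a ha; apply: iadd_r.
have [gk [h hh]] := noeth_lc hN hpk.
pose B n a := J (n0 + n)%N a /\ pw P k a.
have [n1 hn1] : exists n1, forall n, (n1 <= n)%N -> forall a, B n1 a -> sat P (B n) a.
  apply: (@VS P gk h) => //.
  - move=> n; split; first by split; apply: id0.
    split; first by move=> a b [h1 h2] [h3 h4]; split; apply: idD.
    by move=> c a [h1 h2]; split; apply: idM.
  - by move=> n a [h1 h2]; split => //; rewrite addnS in h1; apply: hJd.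
  - by move=> n a [_ /hh].
  - move=> n c l hl hc.
    have hl' : pw P k (h l) by apply/hh; apply: lc_gen.
    split; last by apply: idM.
    by apply: hJP => /=; apply: imul_elt.
exists (n0 + n1)%N => n hn a ha.
have hA : A n0 a by apply: iadd_l => //; apply: (desc_le hJd _ ha); apply: leq_addr.
have [s [hs [j [p [hj [hp E]]]]]] := hn0 n (leq_trans (leq_addr _ _) hn) a hA.
have hBp : B n1 p.
  split => //.
  have -> : p = s * a - j by rewrite E addrC addKr.
  apply: idB => //; first by apply: idM.
  exact: (desc_le hJd hn).
have hn1' : (n1 <= n - n0)%N by lia.
have [s' [hs' [hsp _]]] := hn1 _ hn1' p hBp.
have e : (n0 + (n - n0))%N = n by lia.
rewrite e in hsp.
exists (s' * s); split; first exact: prime_notin_mul.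
by rewrite -mulrA E mulrDr; apply: idD => //; apply: idM.
Qed.

End CA5.


Section CA6.
Variable R : comNzRingType.
Implicit Types (I J K M P Q N : R -> Prop) (a b c s u v : R).

Lemma lc_mul_ideal K k (g : nat -> R) s : is_ideal K ->
  (forall j, (j < k)%N -> K (s * g j)) -> forall a, lc k g a -> K (s * a).
Proof.
move=> hK H a [c ->]; rewrite mulr_sumr.
apply: (@id_sum _ _ k (fun i => s * (c i * g i))) => // i hi.
by rewrite mulrCA; apply: idM => //; apply: H.
Qed.

Lemma PIT N Q P y q0 : noetherian R -> is_prime N -> is_prime Q -> is_prime P ->
  (forall z, N z -> Q z) -> Q q0 -> ~ N q0 -> (forall z, Q z -> P z) -> P y -> ~ Q y ->
  exists Q', is_prime Q' /\ (forall z, N z -> Q' z) /\ Q' y /\ (forall z, Q' z -> P z) /\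
     ~ (forall z, P z -> Q' z).
Proof.
move=> hNo hN hQ hP hNQ hq0 nq0 hQP hyP nyQ.
have hNi := prime_ideal hN; have hQi := prime_ideal hQ; have hPi := prime_ideal hP.
apply: NNPP => Hn.
pose I := ideal_add N (prin y).
have hIi : is_ideal I by apply: iadd_ideal => //; apply: prin_ideal.
have hmin : forall Q', is_prime Q' -> (forall z, I z -> Q' z) -> (forall z, Q' z -> P z) ->
    forall z, P z -> Q' z.
  move=> Q' hQ' hIQ hQ'P; apply: NNPP => H; apply: Hn; exists Q'; split => //.
  split; first by move=> z hz; apply: hIQ; apply: iadd_l => //; apply: prin_ideal.
  split => //; apply: hIQ; apply: iadd_r => //; by exists 1; rewrite mul1r.
have [s0 [k [hs0 hA1]]] := A1 hNo hIi hP hmin.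
pose Sym n := sat Q (ideal_add (pw Q n) N).
have hSi n : is_ideal (Sym n) by apply: sat_ideal => //; apply: iadd_ideal => //; apply: pw_ideal.
have hSd n a : Sym n.+1 a -> Sym n a.
  case=> s [hs [u [v [hu [hv E]]]]]; exists s; split => //; exists u, v; split => //.
  exact: pw_desc.
have hNS n z : N z -> Sym n z by move=> hz; apply: sat_incl => //; apply: iadd_r => //; apply: pw_ideal.
have hPS n z : pw Q n z -> Sym n z by move=> hz; apply: sat_incl => //; apply: iadd_l.
have hS2 n c : Sym n (c * y) -> Sym n c.
  case=> s [hs h]; exists (s * y); split; first exact: prime_notin_mul.
  by rewrite mulrAC -mulrA.
pose J n := sat P (ideal_add (Sym n) (prin y)).
have hJi n : is_ideal (J n) by apply: sat_ideal => //; apply: iadd_ideal => //; apply: prin_ideal.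
have [n hn] : exists n0, forall n, (n0 <= n)%N -> forall a, J n0 a -> sat P (J n) a.
  apply: (@DCC _ P k) => //.
    move=> n a [s [hs [u [v [hu [hv E]]]]]]; exists s; split => //; exists u, v; split => //.
    exact: hSd.
  move=> n z hz; exists s0; split => //.
  case: (hA1 z hz) => u [v [hu [hv E]]]; exists u, v; split => //; exact: hNS.
have X a : Sym n a -> exists s, ~ P s /\ exists b c, Sym n.+1 b /\ Sym n c /\ s * a = b + c * y.
  move=> ha.
  have : J n a by apply: sat_incl => //; apply: iadd_l => //; apply: prin_ideal.
  move/(hn n.+1 (leqnSn n))/(sat_idem hP) => [s [hs [b [v [hb [[c ->] E]]]]]].
  exists s; split => //; exists b, c; split => //; split => //.
  apply: hS2; have -> : c * y = s * a - b by rewrite E addrC addKr.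
  by apply: idB => //; [apply: idM | apply: hSd].
have [kg [g hg]] := noeth_lc hNo (hSi n).
have [s1 [hs1 H1]] : exists s, ~ P s /\ forall j, (j < kg)%N -> Sym n.+1 (s * g j).
  apply: GN => // j hj.
  have hgj : Sym n (g j) by apply/hg; apply: lc_gen.
  have [s [hs [b [c [hb [hc E]]]]]] := X _ hgj.
  have [d hd] : lc kg g c by apply/hg.
  exists s; split => //; exists (fun l => y * d l); split; first by move=> l; apply: idMr.
  have -> : s * g j - \sum_(l < kg) y * d l * g l = b.
    rewrite E hd mulr_suml.
    have -> : \sum_(i < kg) d i * g i * y = \sum_(l < kg) y * d l * g l.
      by apply: eq_bigr => i _; ring.
    by rewrite addrK.
  done.
have H1' a : Sym n a -> Sym n.+1 (s1 * a) by move=> /hg; apply: lc_mul_ideal.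
have [kh [h hh]] := noeth_lc hNo (pw_ideal n hQi).
have [s2 [hs2 H2]] : exists s, ~ Q s /\ forall j, (j < kh)%N -> N (s * h j).
  apply: GN => // j hj.
  have hj' : pw Q n (h j) by apply/hh; apply: lc_gen.
  case: (H1' _ (hPS _ _ hj')) => s' [hs' [v [nu [hv [hnu E]]]]].
  have [c [hc hv']] := mul_lc hQi (fun a => proj1 (hh a)) hv.
  exists (s' * s1); split.
    by apply: prime_notin_mul => // h1; apply: hs1; apply: hQP.
  exists c; split => //.
  by rewrite -mulrA E hv' addrAC subrr add0r.
have H2' z : pw Q n z -> N (s2 * z) by move=> /hh; apply: lc_mul_ideal.
have := H2' _ (pw_exp n hq0); case/(proj2 (proj2 hN)) => [/hNQ //|].
by move/(prime_pow hN).
Qed.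

End CA6.


Section CA7.
Variable R : comNzRingType.
Implicit Types (I J K M P Q N : R -> Prop) (a b c s u v : R).

Lemma chain_ext (C : nat -> R -> Prop) n (T : R -> Prop) : prime_chain C n -> is_prime T ->
  (forall a, C n a -> T a) -> (exists a, T a /\ ~ C n a) ->
  prime_chain (fun i => if (i <= n)%N then C i else T) n.+1.
Proof.
move=> [hp hi] hT hsub hstr; split.
  by move=> i hin; case: ifP => // h; apply: hp.
move=> i hin; case: (ltnP i n) => h.
  by rewrite (ltnW h); apply: hi.
have -> : i = n by apply/eqP; rewrite eqn_leq h -ltnS hin.
by rewrite leqnn.
Qed.

Lemma chain_restr (C : nat -> R -> Prop) n : prime_chain C n.+1 -> prime_chain C n.
Proof.
move=> [hp hi]; split; first by move=> i hin; apply: hp; apply: leqW.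
by move=> i hin; apply: hi; apply: leqW.
Qed.

Lemma chain_mono (C : nat -> R -> Prop) n i j a : prime_chain C n -> (i <= j <= n)%N -> C i a -> C j a.
Proof.
move=> [_ hi] /andP [hij hjn]; move: hij hjn; move=> /subnKC <-.
elim: (j - i)%N => [|d IH]; first by rewrite addn0.
rewrite addnS => hle h; apply: (proj1 (hi _ hle)); apply: IH => //; exact: ltnW.
Qed.

Lemma chainA n : noetherian R -> forall (C : nat -> R -> Prop) y,
  prime_chain C n.+1 -> C n.+1 y ->
  exists D : nat -> R -> Prop, prime_chain D n /\ (forall a, D n a <-> C n.+1 a) /\ D 0%N y /\
    (forall a, C 0%N a -> D 0%N a).
Proof.
move=> hNo; elim: n => [|n IH] C y hC hy.
  exists (fun _ => C 1%N); split; first by split; [move=> i _; exact: (proj1 hC) 1%N isT | move=> i].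
  split => //; split => //; move=> a; apply: (proj1 ((proj2 hC) 0%N isT)).
have hp := proj1 hC; have hi := proj2 hC.
case: (classic (C n.+1 y)) => hyn.
  have [D [hD [hDn [hD0 hC0]]]] := IH C y (chain_restr hC) hyn.
  exists (fun i => if (i <= n)%N then D i else C n.+2); split.
    apply: chain_ext => //; first by apply: hp.
      by move=> a /hDn; apply: (proj1 (hi _ (ltnSn _))).
    case: (proj2 (hi _ (ltnSn n.+1))) => a [h1 h2]; exists a; split => //; by move/hDn.
  by rewrite ltnn leq0n.
have [a0 [ha0 na0]] := proj2 (hi n (leqW (ltnSn n))).
have [Q' [hQ' [hNQ [hyQ [hQP hnPQ]]]]] := PIT hNo (hp n (leqW (leqW (leqnn n))))
   (hp n.+1 (leqW (leqnn _))) (hp n.+2 (leqnn _)) (proj1 (hi n (leqW (ltnSn n)))) ha0 na0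
   (proj1 (hi n.+1 (ltnSn _))) hy hyn.
pose E i := if (i <= n)%N then C i else Q'.
have hE : prime_chain E n.+1.
  apply: chain_ext => //; first by apply: chain_restr; apply: chain_restr.
  exists y; split => // h; apply: hyn; apply: (proj1 (hi n (leqW (ltnSn n)))) h.
have hyE : E n.+1 y by rewrite /E ltnn.
have [D [hD [hDn [hD0 hC0]]]] := IH E y hE hyE.
exists (fun i => if (i <= n)%N then D i else C n.+2); split.
  apply: chain_ext => //; first by apply: hp.
    by move=> a /hDn; rewrite /E ltnn; apply: hQP.
  have [a [h1 h2]] : exists a, C n.+2 a /\ ~ Q' a.
    by apply: NNPP => H; apply: hnPQ => z hz; apply: NNPP => hz'; apply: H; exists z.
  exists a; split => //; move/hDn; by rewrite /E ltnn.
rewrite ltnn leq0n; split => //; split => // a ha; apply: hC0; by rewrite /E leq0n.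
Qed.

Lemma chainIter (y : nat -> R) r : noetherian R -> forall (C : nat -> R -> Prop) n,
  prime_chain C n -> (forall i, (i < r)%N -> C n (y i)) ->
  forall j, (j <= r)%N -> exists n2 (D : nat -> R -> Prop), prime_chain D n2 /\ (n <= n2 + j)%N /\
     (forall i, (i < j)%N -> D 0%N (y i)) /\ (forall i, (i < r)%N -> D n2 (y i)).
Proof.
move=> hNo C n hC htop; elim=> [|j IH] hj.
  by exists n, C; rewrite addn0; split.
have [n2 [D [hD [hle [h0 htop']]]]] := IH (ltnW hj).
case: n2 hD hle h0 htop' => [|m] hD hle h0 htop'.
  exists 0%N, D; split => //; split; first by apply: (leq_trans hle); rewrite add0n leqnSn.
  split => // i; rewrite ltnS leq_eqVlt => /orP [/eqP ->|hi]; [by apply: htop' | by apply: h0].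
have [D' [hD' [hD'n [hD'0 hC0]]]] := chainA hNo hD (htop' j hj).
exists m, D'; split => //; split; first by rewrite addnS -addSn.
split.
  move=> i; rewrite ltnS leq_eqVlt => /orP [/eqP ->|hi] //; by apply: hC0; apply: h0.
by move=> i hi; apply/hD'n; apply: htop'.
Qed.

End CA7.


Section CA8.
Variable R : comNzRingType.
Implicit Types (I J K M P Q N : R -> Prop) (a b c s u v : R).

Lemma ext_fun n (g : 'I_n -> R) : exists g' : nat -> R, forall i : 'I_n, g' i = g i.
Proof. by exists (fun i => if insub i is Some j then g j else 0) => i; rewrite valK. Qed.

Lemma sum_ext n (g : 'I_n -> R) (g' : nat -> R) (c : 'I_n -> R) :
  (forall i : 'I_n, g' i = g i) -> lc n g' (\sum_(i < n) c i * g i).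
Proof.
move=> H; have [c' hc'] := ext_fun c; exists c'; apply: eq_bigr => i _; by rewrite hc' H.
Qed.

Lemma sq_imul I a : ideal_sq I a -> imul I I a.
Proof.
case=> n [u [v [huv ->]]]; exists [seq (u i, v i) | i <- enum 'I_n]; split.
  by move=> pr /mapP [i _ ->]; exact: huv.
by rewrite big_map big_enum.
Qed.

Lemma split_l m n (i : 'I_m) : split (lshift n i) = inl i.
Proof. exact: (unsplitK (inl _ i)). Qed.
Lemma split_r m n (i : 'I_n) : split (rshift m i) = inr i.
Proof. exact: (unsplitK (inr _ i)). Qed.

End CA8.

Unset Implicit Arguments.

Theorem mainTheorem13 (R : comNzRingType) (m p : R -> Prop) (r t : nat)
  (y : 'I_r -> R) (x : 'I_t -> R) :
  noetherian R -> local_with m ->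
  (forall P, associated P <-> (forall a, P a <-> @nilrad R a)) ->
  is_prime p ->
  rsop_loc_red p y -> rsop_quot m p x ->
  (forall i, ~ p (x i)) ->
  free_conormal_basis p y ->
  red_regular m.
Proof.
move=> hNo [hmi hm] hass hp [hyp [_ [[Pc [hPc hPr]] _]]] [hxm [hmpx [[Pq [hPq hPq0]] hqdim]]] _ [hspan _].
have hnil : is_prime (@nilrad R) by case: (proj2 (hass (@nilrad R)) (fun a => iff_refl _)).
have hnili := prime_ideal hnil.
have hpi := prime_ideal hp.
have unit_of a : ~ m a -> exists b, a * b = 1 by move=> h; apply: NNPP => H; apply: h; apply/hm.
have hmP : is_prime m.
  split => //; split; first by move/hm; apply; exists 1; rewrite mulr1.
  move=> a b hab; apply: NNPP => H.
  have [a' ha'] := unit_of a (fun h => H (or_introl h)).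
  have [b' hb'] := unit_of b (fun h => H (or_intror h)).
  move/hm: hab; apply; exists (a' * b').
  by rewrite mulrACA ha' hb' mulr1.
have prime_sub_m Pp : is_prime Pp -> forall a, Pp a -> m a.
  move=> hPp a ha; apply: NNPP => na; have [b hb] := unit_of a na.
  apply: (prime_notin1 hPp); rewrite -hb; apply: idMr => //; exact: prime_ideal.
have hpm := prime_sub_m p hp.
have nil_sub Pp : is_prime Pp -> forall a, @nilrad R a -> Pp a.
  by move=> hPp a [n hn]; apply: (prime_pow (n := n) hPp); rewrite hn; apply: id0; apply: prime_ideal.
have [yn hyn] := ext_fun y.
pose K := ideal_add (lc r yn) (@nilrad R).
have hKi : is_ideal K by apply: iadd_ideal => //; apply: lc_ideal.
have hpK : forall a, p a -> K a.
  have [kp [gp hgp]] := noeth_lc hNo hpi.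
  have [s [hs Hs]] : exists s, ~ m s /\ forall j, (j < kp)%N -> K (s * gp j).
    apply: GN => // j hj.
    have hpj : p (gp j) by apply/hgp; apply: lc_gen.
    have [c [u [nu [hu [hnu E]]]]] := hspan _ hpj.
    have [d [hd hud]] := mul_lc hpi (fun a => proj1 (hgp a)) (sq_imul hu).
    exists 1; split; first exact: prime_notin1.
    exists d; split; first by move=> l; apply: hpm.
    have -> : 1 * gp j - \sum_(l < kp) d l * gp l = \sum_(i < r) c i * y i + nu.
      by rewrite -hud mul1r -[gp j](subrK (\sum_(i < r) c i * y i)) E; ring.
    by exists (\sum_(i < r) c i * y i), nu; split; [apply: sum_ext | split].
  move=> a ha; have [b hb] := unit_of s hs.
  have h := lc_mul_ideal hKi Hs (proj1 (hgp a) ha).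
  have -> : a = b * (s * a) by rewrite mulrA (mulrC b) hb mul1r.
  exact: idM.
pose z (i : 'I_(r + t)) := match split i with inl j => y j | inr j => x j end.
exists (r + t)%N, z; split; last first.
  move=> a; split.
    move/hmpx => [u [v [hu [[d ->] ->]]]].
    have [w [nu [[c ->] [hnu ->]]]] := hpK u hu.
    exists (\sum_(i < r) c i * yn i + \sum_(j < t) d j * x j), nu.
    split; last by split => //; ring.
    exists (fun i => match split i with inl j => c j | inr j => d j end).
    rewrite big_split_ord /=; congr (_ + _); apply: eq_bigr => i _.
      by rewrite /z split_l hyn.
    by rewrite /z split_r.
  move=> [w [nu [[e ->] [hnu ->]]]]; apply: idD => //; last by apply: nil_sub.
  apply: (big_ind (fun v => m v)) => //; first by apply: id0.
    by move=> ? ? ? ?; apply: idD.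
  move=> i _; apply: idM => //; rewrite /z; case: (split i) => j; [apply: hpm; apply: hyp | apply: hxm].
have hPci := proj1 hPc; have hPcs := proj2 hPc.
have hPqi := proj1 hPq; have hPqs := proj2 hPq.
split.
  exists (fun i => if (i < r)%N then Pc i else Pq (i - r)%N); split.
    move=> i hi; case: ifP => h; first by apply: hPci; apply: ltnW.
    by apply: hPqi; lia.
  move=> i hi; case: (ltnP i.+1 r) => h1.
    by rewrite (ltnW h1); apply: hPcs; apply: ltnW.
  case: (ltnP i r) => h2.
    have ei : i.+1 = r by lia.
    have e0 : (i.+1 - r)%N = 0%N by lia.
    rewrite e0; split.
      move=> a ha; apply: hPq0; apply/hPr; rewrite -ei; exact: (proj1 (hPcs i h2)).
    case: (proj2 (hPcs i h2)) => a [h3 h4]; exists a; split => //.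
    by apply: hPq0; apply/hPr; rewrite -ei.
  have e1 : (i.+1 - r)%N = (i - r).+1 by lia.
  rewrite e1; apply: hPqs; lia.
move=> C n hC.
have [n' [D [hD [hnn' htop]]]] : exists n' (D : nat -> R -> Prop), prime_chain D n' /\ (n <= n')%N /\
    forall a, m a -> D n' a.
  case: (classic (forall a, m a -> C n a)) => H; first by exists n, C.
  exists n.+1, (fun i => if (i <= n)%N then C i else m); split; last by split => //; rewrite ltnn.
  apply: chain_ext => //; first by apply: prime_sub_m; apply: (proj1 hC).
  apply: NNPP => H2; apply: H => a ha; apply: NNPP => H3; apply: H2; by exists a.
have hyn' i : (i < r)%N -> p (yn i).
  by move=> hi; have := hyp (Ordinal hi); rewrite -hyn.
have [n2 [D' [hD' [hle [h0 _]]]]] := chainIter hNo hD (fun i hi => htop _ (hpm _ (hyn' i hi))) (leqnn r).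
have hD'0 : is_prime (D' 0%N) by apply: (proj1 hD').
have hpD : forall a, p a -> D' 0%N a.
  move=> a /hpK [w [nu [hw [hnu ->]]]]; apply: idD; first exact: prime_ideal.
    exact: (lc_sub (prime_ideal hD'0) h0 hw).
  exact: nil_sub.
have := hqdim D' n2 hD' hpD; lia.
Qed.
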